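(* For every $\gamma>0$, $2\arctan\gamma<\min\{\eta^{-1}(\gamma),\pi\}$.
   Context: Let $\psi(\theta)=\frac{\theta-\sin\theta}{1-\cos\theta}$ and $A(\theta)=\frac{\theta\cos\frac\theta2-2\sin\frac\theta2}{\theta-\sin\theta}$ for $0<\theta<2\pi$. The function $\eta(\theta)=\psi(\theta)(1-A(\theta))$ is a strictly increasing bijection of $(0,2\pi)$ onto $(0,\infty)$, and $\eta^{-1}$ denotes its inverse. *)

(* Defs.v *)
From Stdlib Require Import Reals ClassicalEpsilon.
Open Scope R_scope.

Definition psi (t : R) : R := (t - sin t) / (1 - cos t).

Definition Afun (t : R) : R := (t * cos (t / 2) - 2 * sin (t / 2)) / (t - sin t).

Definition eta (t : R) : R := psi t * (1 - Afun t).

(* η^{-1}(γ): the (unique, by the stated bijectivity of η : (0,2π) -> (0,∞))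
   θ ∈ (0, 2π) with η(θ) = γ; chosen by Hilbert's epsilon. *)
Definition eta_inv (g : R) : R :=
  epsilon (inhabits 0) (fun t => 0 < t < 2 * PI /\ eta t = g).

(* Main.v *)
Require Import Defs.
From Stdlib Require Import Reals Lra Psatz ClassicalEpsilon.
Open Scope R_scope.

Lemma h_pos (s : R) : 0 < s -> s < PI -> s * cos s < sin s.
Proof.
  intros H0 H1.
  destruct (MVT_cor2 (fun x => sin x - x * cos x) (fun x => x * sin x) 0 s H0) as [c [Hc Hc2]].
  - intros c _.
    replace (c * sin c) with (cos c - (1 * cos c + c * (- sin c))) by ring.
    exact (derivable_pt_lim_minus sin (id * cos)%F c _ _ (derivable_pt_lim_sin c)
      (derivable_pt_lim_mult id cos c _ _ (derivable_pt_lim_id c) (derivable_pt_lim_cos c))).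
  - rewrite sin_0, cos_0 in Hc.
    assert (0 < sin c) by (apply sin_gt_0; lra).
    assert (0 < c * sin c * s) by (apply Rmult_lt_0_compat; [apply Rmult_lt_0_compat|]; lra).
    lra.
Qed.

Lemma eta_form (t : R) : 0 < t < 2 * PI ->
  eta t = (t/2 + sin (t/2)) / (1 + cos (t/2)).
Proof.
  intros Ht. set (s := t/2).
  assert (Hs : 0 < s < PI) by (unfold s; lra).
  assert (Ht2 : t = 2 * s) by (unfold s; field).
  assert (Hsn : 0 < sin s) by (apply sin_gt_0; lra).
  pose proof (sin2_cos2 s) as Hsc. unfold Rsqr in Hsc.
  assert (Hc1 : -1 < cos s < 1) by nra.
  assert (Hst : sin t < t) by (apply sin_lt_x; lra).
  assert (E1 : sin t = 2 * sin s * cos s) by (rewrite Ht2; apply sin_2a).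
  assert (E2 : 1 - cos t = 2 * (1 - cos s) * (1 + cos s)).
  { rewrite Ht2, cos_2a_sin. nra. }
  unfold eta, psi, Afun. fold s. rewrite E2.
  assert (t - sin t <> 0) by lra.
  assert (1 - cos s <> 0) by lra.
  assert (1 + cos s <> 0) by lra.
  replace ((t - sin t) / (2 * (1 - cos s) * (1 + cos s)) *
           (1 - (t * cos s - 2 * sin s) / (t - sin t)))
    with ((t - sin t - (t * cos s - 2 * sin s)) / (2 * (1 - cos s) * (1 + cos s)))
    by (field; auto).
  rewrite E1, Ht2. field. auto.
Qed.

Lemma eta_exists (g : R) : 0 < g -> exists t, 0 < t < 2 * PI /\ eta t = g.
Proof.
  intros Hg.
  assert (Hc : continuity (fun s => s + sin s - g * (1 + cos s))) by reg.
  assert (HP := PI_RGT_0).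
  destruct (IVT _ 0 PI Hc HP) as [s [Hs Hf]].
  - rewrite sin_0, cos_0. lra.
  - rewrite sin_PI, cos_PI. lra.
  - assert (s <> 0) by (intro; subst; rewrite sin_0, cos_0 in Hf; lra).
    assert (s <> PI) by (intro; subst; rewrite sin_PI, cos_PI in Hf; lra).
    exists (2 * s). split. lra.
    rewrite eta_form by lra.
    replace (2 * s / 2) with s by field.
    assert (0 < sin s) by (apply sin_gt_0; lra).
    pose proof (sin2_cos2 s) as Hsc. unfold Rsqr in Hsc.
    assert (1 + cos s <> 0) by nra.
    field_simplify_eq; auto. lra.
Qed.

Theorem lemma4p2 : forall g : R, 0 < g -> 2 * atan g < Rmin (eta_inv g) PI.
Proof.
  intros g Hg.
  pose proof (epsilon_spec (inhabits 0) (fun t => 0 < t < 2 * PI /\ eta t = g) (eta_exists g Hg)) as [Ht He].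
  fold (eta_inv g) in Ht, He.
  set (t := eta_inv g) in *.
  pose proof (atan_bound g) as Hb.
  assert (HPI : 2 * atan g < PI) by lra.
  apply Rmin_glb_lt; [|exact HPI].
  destruct (Rlt_le_dec t PI) as [Hlt|Hge]; [|lra].
  set (s := t / 2).
  assert (Hs : 0 < s < PI / 2) by (unfold s; lra).
  assert (Hcs : 0 < cos s) by (apply cos_gt_0; lra).
  assert (Hsn : 0 < sin s) by (apply sin_gt_0; lra).
  pose proof (h_pos s ltac:(lra) ltac:(lra)) as Hh.
  rewrite eta_form in He by lra. fold s in He.
  assert (Hlt2 : g < tan s).
  { rewrite <- He. unfold tan.
    apply Rminus_gt_0_lt.
    replace (sin s / cos s - (s + sin s) / (1 + cos s))
      with ((sin s - s * cos s) / (cos s * (1 + cos s))) by (field; lra).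
    apply Rdiv_lt_0_compat; nra. }
  apply atan_increasing in Hlt2.
  rewrite atan_tan in Hlt2 by lra.
  unfold s in Hlt2. lra.
Qed.
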